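(* Let $\mathcal M=(G,In,Out,Leak)$ be a linear compartmental model with $n$ compartments and compartmental matrix $A$, and let $q,r$ be compartments. Write $$\det\big((\lambda I-A)^{r,q}\big)=c_{n-1}\lambda^{n-1}+c_{n-2}\lambda^{n-2}+\dots+c_0.$$ Then $$c_k=(-1)^{q+r}\sum_{F\in\mathcal F^{r,q}_{n-k-1}(\widetilde G^*_q)}\pi_F\qquad\text{for }k=0,1,\dots,n-1.$$
   Context: A linear compartmental model $\mathcal M=(G,In,Out,Leak)$ consists of a finite directed graph $G=(V_G,E_G)$ without multi-edges, compartments $V_G=\{1,\dots,n\}$, and subsets $In,Out,Leak\subseteq V_G$; edge $j\to i$ carries label (parameter) $a_{ij}$ and each $i\in Leak$ carries $a_{0i}$. The compartmental matrix $A$ has $A_{ii}=-\sum_{k:\,i\to k\in E_G}a_{ki}$ (minus $a_{0i}$ if $i\in Leak$), $A_{ij}=a_{ij}$ if $j\to i\in E_G$, $0$ otherwise. $B^{r,q}$ denotes $B$ with row $r$ and column $q$ removed. The leak-augmented graph $\widetilde G$ is obtained from $G$ by adding a node $0$ and, for each $j\in Leak$, an edge $j\to0$ labeled $a_{0j}$; $\widetilde G^*_q$ is obtained from $\widetilde G$ by removing all edges outgoing from $q$. A spanning incoming forest of a graph is a spanning subgraph whose underlying undirected graph has no cycles and in which each node has at most one outgoing edge. $\mathcal F_j^{k,\ell}(H)$ is the set of spanning incoming forests of $H$ with exactly $j$ edges in which some connected component contains both $k$ and $\ell$. $\pi_F$ is the product of the edge labels of $F$ ($1$ if there are no edges). 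*)

(* Defs.v *)
From HB Require Import structures.
From mathcomp Require Import all_boot all_order all_algebra.
Set Implicit Arguments. Unset Strict Implicit. Unset Printing Implicit Defensive.
Import GRing.Theory.
Local Open Scope ring_scope.

(* Compartments are 'I_n (0-based; the paper's compartment i is our i-1,
   which does not change the parity of q + r).
   The graph is given by E : rel 'I_n with  E j i  meaning the edge j -> i;
   it must be irreflexive (no self-loops).  Labels: a i j is a_{ij}, the label
   of edge j -> i; a0 j is a_{0j}, the leak label of j. *)

Definition compartmental_matrix (R : comNzRingType) (n : nat) (E : rel 'I_n)
  (Leak : {set 'I_n}) (a : 'I_n -> 'I_n -> R) (a0 : 'I_n -> R) : 'M[R]_n :=
  \matrix_(i, j)
    if i == j then - (\sum_(k | E i k) a k i) - (if i \in Leak then a0 i else 0)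
    else if E j i then a i j else 0.

(* Nodes of the leak-augmented graph: None is node 0, Some i is compartment i. *)
Definition lnode (n : nat) := option 'I_n.
Definition ledge (n : nat) := (lnode n * lnode n)%type.  (* (source, target) *)

Definition edges_Gtilde_star (n : nat) (E : rel 'I_n) (Leak : {set 'I_n})
  (q : 'I_n) : {set ledge n} :=
  [set e : ledge n | match e with
                     | (Some j, Some i) => E j i && (j != q)
                     | (Some j, None) => (j \in Leak) && (j != q)
                     | _ => false
                     end].

Definition elabel (R : comNzRingType) (n : nat) (a : 'I_n -> 'I_n -> R)
  (a0 : 'I_n -> R) (e : ledge n) : R :=
  match e with
  | (Some j, Some i) => a i j
  | (Some j, None) => a0 j
  | _ => 0
  end.

Definition piF (R : comNzRingType) (n : nat) (a : 'I_n -> 'I_n -> R)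
  (a0 : 'I_n -> R) (F : {set ledge n}) : R :=
  \prod_(e in F) elabel a a0 e.

Definition joins (n : nat) (e : ledge n) (u v : lnode n) : bool :=
  (e == (u, v)) || (e == (v, u)).

Definition ucycle_of (n : nat) (F : {set ledge n}) (k : nat)
  (vs : k.-tuple (lnode n)) (es : k.-tuple (ledge n)) : bool :=
  [&& (2 <= k)%N, uniq vs, uniq es, all (fun e => e \in F) es &
      [forall i : 'I_k,
         joins (tnth es i) (tnth vs i) (nth None vs ((i.+1) %% k)%N)]].

(* The underlying undirected graph of F has no cycle (a cycle has distinct
   vertices, hence length at most the number n+1 of nodes). *)
Definition uacyclic (n : nat) (F : {set ledge n}) : bool :=
  ~~ [exists k : 'I_(n.+2),
        [exists vs : k.-tuple (lnode n),
           [exists es : k.-tuple (ledge n), ucycle_of F vs es]]].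

Definition spanning_incoming_forest (n : nat) (H F : {set ledge n}) : bool :=
  [&& F \subset H, uacyclic F &
      [forall u : lnode n, (#|[set e in F | e.1 == u]| <= 1)%N]].

Definition same_component (n : nat) (F : {set ledge n}) (u v : lnode n) : bool :=
  connect (fun x y => ((x, y) \in F) || ((y, x) \in F)) u v.

Definition forests_jkl (n : nat) (H : {set ledge n}) (j : nat)
  (k l : lnode n) : {set {set ledge n}} :=
  [set F : {set ledge n} | [&& spanning_incoming_forest H F, #|F| == j &
                               same_component F k l]].

(* Main.v *)
Require Import Defs.
From mathcomp Require Import all_boot all_order all_algebra perm.
From mathcomp Require Import zify.
Set Implicit Arguments. Unset Strict Implicit. Unset Printing Implicit Defensive.
Import GRing.Theory.
Local Open Scope ring_scope.
Lemma big_optionE (R : nmodType) (T : finType) (F : option T -> R) :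
  \sum_(x : option T) F x = F None + \sum_(y : T) F (Some y).
Proof.
rewrite (bigD1 None) //=; congr (_ + _).
rewrite (reindex_omap Some id) //=; last by case.
by apply: eq_bigl => y; rewrite eqxx.
Qed.
Definition permT n := {perm 'I_n}.
Lemma det_expand (R : comNzRingType) n (C : finType) (W : 'I_n -> C -> 'I_n -> R) :
  \det (\matrix_(j, i) \sum_c W j c i) =
  \sum_(f : {ffun 'I_n -> C}) \det (\matrix_(j, i) W j (f j) i).
Proof.
rewrite /determinant.
transitivity (\sum_(s : permT n) \sum_(f : {ffun 'I_n -> C}) (-1) ^+ s * \prod_i W i (f i) (s i)).
  apply: eq_bigr => s _; rewrite -mulr_sumr -(bigA_distr_bigA (fun i c => W i c (s i))); congr (_ * _).
  by apply: eq_bigr => i _; rewrite mxE.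
rewrite exchange_big /=; apply: eq_bigr => f _; apply: eq_bigr => s _.
by congr (_ * _); apply: eq_bigr => i _; rewrite mxE.
Qed.
Lemma tri_det (R : comNzRingType) n (P : 'M[R]_n) (d : 'I_n -> nat) :
  (forall i, P i i = 1) -> (forall i j, i != j -> P i j != 0 -> (d j < d i)%N) ->
  \det P = 1.
Proof.
move=> Hd Ho; rewrite /determinant (bigD1 (1%g : {perm 'I_n})) //= [X in _ + X]big1 ?addr0.
  by rewrite odd_perm1 expr0 mul1r big1 // => i _; rewrite perm1 Hd.
move=> s Hs.
have [i0 Hi0] : exists i0, s i0 != i0.
  apply/existsP; apply: contraR Hs; rewrite negb_exists => /forallP H.
  by apply/eqP/permP => i; rewrite perm1; apply/eqP; have := H i; rewrite negbK.
case: (@arg_minnP _ i0 (fun j => s j != j) d Hi0) => i Hi Hmin.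
have Hsi : s (s i) != s i by apply: contra Hi => /eqP/perm_inj ->.
case: (eqVneq (P i (s i)) 0) => [H0|Hn0].
  by rewrite (bigD1 i) //= H0 mul0r mulr0.
have := Ho _ _ _ Hn0; rewrite eq_sym Hi => /(_ isT).
by rewrite ltnNge Hmin.
Qed.
Lemma det0_ker (R : comNzRingType) n (P : 'M[R]_n) (x : 'rV_n) j :
  x *m P = 0 -> x 0 j = 1 -> \det P = 0.
Proof.
move=> H Hx; have := congr1 (fun M => M *m \adj P) H.
rewrite -mulmxA mul_mx_adj mul0mx mul_mx_scalar => /matrixP /(_ 0 j).
by rewrite !mxE Hx mulr1.
Qed.
Lemma det_row0 (R : comNzRingType) n (P : 'M[R]_n) j :
  (forall i, P j i = 0) -> \det P = 0.
Proof. by move=> H; rewrite (expand_det_row _ j) big1 // => i _; rewrite H mul0r. Qed.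

Section Core.
Variables (R : comNzRingType) (n : nat) (E : rel 'I_n) (Hirr : irreflexive E)
  (Leak : {set 'I_n}) (a : 'I_n -> 'I_n -> R) (a0 : 'I_n -> R) (q r : 'I_n).
Local Notation T := (lnode n).
Local Notation H := (edges_Gtilde_star E Leak q).
Variable f : {ffun 'I_n -> option (lnode n)}.
Definition validf := (f q == None) &&
  [forall j, if f j is Some t then (Some j, t) \in H else true].
Definition Ff : {set ledge n} :=
  [set e : ledge n | if e.1 is Some j then f j == Some e.2 else false].
Definition nxt (v : T) : T := if v is Some j then (if f j is Some t then t else v) else v.
Definition Pf : 'M[R]_n := \matrix_(j, i)
  if j == q then (i == r)%:R else
  if f j is Some t then (i == j)%:R - (Some i == t)%:R else (i == j)%:R.
Definition ev (t : T) : 'rV[R]_n := if t is Some i then delta_mx 0 i else 0.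
Definition gv (u : T) : 'rV[R]_n :=
  if u is Some j then (if f j is Some _ then delta_mx 0 j else 0) else 0.
Definition rt v := iter n.+1 nxt v.
Definition depth v := (\sum_(m < n.+1) (nxt (iter m nxt v) != iter m nxt v))%N.

Hypothesis Hv : validf.

Lemma fq : f q = None.
Proof. by move: Hv => /andP[/eqP]. Qed.
Lemma fH j t : f j = Some t -> (Some j, t) \in H.
Proof. by move: Hv => /andP[_ /forallP /(_ j)] => + E1; rewrite E1. Qed.
Lemma fneq j t : f j = Some t -> t != Some j.
Proof.
move=> /fH; rewrite inE; case: t => [i|] //= /andP[Hji _].
by apply: contraTneq Hji => [[->]]; rewrite Hirr.
Qed.
Lemma inFf u t : ((u, t) \in Ff) = (if u is Some j then f j == Some t else false).
Proof. by rewrite inE. Qed.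
Lemma Ff_nxt u t : (u, t) \in Ff -> nxt u = t /\ t != u.
Proof.
rewrite inFf; case: u => [j|] //= /eqP Hj; rewrite Hj; split => //.
exact: fneq Hj.
Qed.
Lemma nxt_root j : (nxt (Some j) == Some j) = (f j == None).
Proof.
rewrite /=; case Hj: (f j) => [t|]; last by rewrite !eqxx.
by rewrite (negbTE (fneq Hj)).
Qed.
Lemma ev_entry t i : ev t 0 i = (Some i == t)%:R.
Proof. by case: t => [k|] /=; rewrite ?mxE //= eqxx. Qed.
Lemma rowPf_some j t : f j = Some t -> row j Pf = ev (Some j) - ev t.
Proof.
move=> Hj; have Hjq : j != q by apply/eqP => Ejq; move: Hj; rewrite Ejq fq.
apply/rowP => i; rewrite !mxE (negbTE Hjq) Hj ev_entry /=.
by [].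
Qed.
Lemma rowPf_none j : f j = None -> j != q -> row j Pf = ev (Some j).
Proof. by move=> Hj Hjq; apply/rowP => i; rewrite !mxE (negbTE Hjq) Hj /= ?mxE ?eqxx. Qed.
Lemma rowPf_q : row q Pf = ev (Some r).
Proof. by apply/rowP => i; rewrite !mxE eqxx /= ?mxE ?eqxx. Qed.
Lemma gPf u : gv u *m Pf = ev u - ev (nxt u).
Proof.
case: u => [j|] /=; last by rewrite mul0mx subrr.
case Hj: (f j) => [t|]; last by rewrite mul0mx subrr.
by rewrite -rowE (rowPf_some Hj).
Qed.
Lemma gq u : gv u 0 q = 0.
Proof.
case: u => [j|] //=; last by rewrite mxE.
case Hj: (f j) => [t|]; last by rewrite mxE.
rewrite mxE /=; case: eqP => // Hqj; move: Hj; rewrite -Hqj fq; discriminate.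
Qed.

Lemma iter_root u m : nxt u = u -> iter m nxt u = u.
Proof. by move=> Hu; elim: m => //= m ->. Qed.
Lemma rt_nxt v : rt (nxt v) = nxt (rt v).
Proof. by rewrite /rt -iterSr. Qed.
Lemma nxt_Ff u : nxt u != u -> (u, nxt u) \in Ff.
Proof.
case: u => [j|] //=; rewrite inFf; case Hj: (f j) => [t|] //=; rewrite ?eqxx ?Hj //.
Qed.
Lemma nxt_some u : nxt u != u -> exists j, u = Some j /\ f j != None.
Proof.
case: u => [j|] //=.
by case Hj: (f j) => [t|]; [exists j; rewrite Hj | rewrite eqxx].
Qed.
Lemma gv_entry u j : nxt u != u -> gv u 0 j = (u == Some j)%:R.
Proof.
case: u => [i|] //=.
case Hi: (f i) => [t|]; last by rewrite eqxx.
by move=> _; rewrite mxE /= eq_sym.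
Qed.
Lemma nxt_q : nxt (Some q) = Some q.
Proof. by rewrite /= fq. Qed.

Definition acycb := [forall v, nxt (rt v) == rt v].

Section Acyc.
Hypothesis Hac : acycb.
Lemma Hac' v : nxt (rt v) = rt v.
Proof. by apply/eqP; move/forallP: Hac. Qed.
Lemma rt_nxt_eq v : rt (nxt v) = rt v.
Proof. by rewrite rt_nxt Hac'. Qed.

Lemma depth_lt u : nxt u != u -> (depth (nxt u) < depth u)%N.
Proof.
move=> Hu; rewrite [X in (_ < X)%N]/depth big_ord_recl [X in (X < _)%N]/depth big_ord_recr /= Hu.
have -> : nxt (iter n nxt (nxt u)) == iter n nxt (nxt u).
  by rewrite -iterSr; apply/eqP; exact: Hac'.
rewrite addn0 add1n ltnS; apply: eq_leq; apply: eq_bigr => i _.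
by rewrite add0n -iterSr.
Qed.

Lemma sc_rt u v : same_component Ff u v -> rt u = rt v.
Proof.
rewrite /same_component => /connectP [p Hp ->].
elim: p u Hp => //= y p IH u /andP [Hxy Hp]; rewrite -IH //.
by case/orP: Hxy => /Ff_nxt [<- _]; rewrite rt_nxt_eq.
Qed.

Lemma sc_iter u m : same_component Ff u (iter m nxt u).
Proof.
elim: m => [|m IH]; first exact: connect0.
apply: connect_trans IH _ => /=.
set x := iter m nxt u.
case: (eqVneq (nxt x) x) => [->|Hx]; first exact: connect0.
by apply: connect1; rewrite nxt_Ff.
Qed.

Lemma sc_iff : same_component Ff (Some r) (Some q) = (rt (Some r) == Some q).
Proof.
apply/idP/eqP => [/sc_rt ->|H]; first by rewrite /rt iter_root // nxt_q.
by rewrite -H; exact: sc_iter.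
Qed.

Definition yv := \sum_(m < n.+1) gv (iter m nxt (Some r)).
Lemma yP : yv *m Pf = ev (Some r) - ev (rt (Some r)).
Proof.
rewrite /yv mulmx_suml.
under eq_bigr => m _ do rewrite gPf.
rewrite -(big_mkord xpredT (fun m => ev (iter m nxt (Some r)) - ev (nxt (iter m nxt (Some r))))).
have := @telescope_sumr _ 0 n.+1 (fun k => - ev (iter k nxt (Some r))) (leq0n _).
rewrite /= opprK => H; transitivity (- ev (nxt (iter n nxt (Some r))) + 'e_r); last by rewrite addrC.
by rewrite -H; apply: eq_bigr => m _; rewrite opprK addrC.
Qed.
Lemma yq : yv 0 q = 0.
Proof. by rewrite /yv summxE big1 // => m _; rewrite gq. Qed.

Lemma det_good : rt (Some r) = Some q -> \det Pf = 1.
Proof.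
move=> Hrt.
pose U : 'M[R]_n := 1%:M - delta_mx q (0 : 'I_1) *m yv.
have UE i l : U i l = (i == l)%:R - (i == q)%:R * yv 0 l.
  by rewrite /U !mxE big_ord1 !mxE (_ : (ord0 == 0 :> 'I_1) = true) ?andbT.
have dU : \det U = 1.
  apply: (tri_det (d := fun i => nat_of_bool (i == q))) => [i|i l Hil].
    rewrite UE eqxx; case: eqP => [->|_]; first by rewrite yq mulr0 subr0.
    by rewrite mul0r subr0.
  rewrite UE (negbTE Hil) sub0r oppr_eq0.
  case: (eqVneq i q) => [Eiq|Niq]; last by rewrite mul0r eqxx.
  by move=> _; case: eqP => // Elq; rewrite Eiq Elq eqxx in Hil.
have UP : U *m Pf = \matrix_(i, j) (if i == q then (j == q)%:R else Pf i j).
  rewrite mulmxBl mul1mx -mulmxA yP Hrt; apply/matrixP => i j.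
  rewrite !mxE big_ord1 !mxE (_ : (ord0 == 0 :> 'I_1) = true) // !andTb.
  case: (i == q); last by rewrite mul0r subr0.
  by rewrite mul1r opprB addrCA subrr addr0.
have dP' : \det (U *m Pf) = 1.
  rewrite UP; apply: (tri_det (d := fun i => depth (Some i))) => [i|i j Hij].
    rewrite !mxE; case: eqP => [_|Hiq] //; rewrite eqxx.
    by case Hi: (f i) => [t|] //; have := fneq Hi; rewrite eq_sym => /negbTE ->; rewrite subr0.
  rewrite !mxE; case: (eqVneq i q) => [Eiq|Hiq].
    by move: Hij; rewrite Eiq eq_sym => /negbTE ->; rewrite eqxx.
  rewrite [j == i]eq_sym (negbTE Hij).
  case Hi: (f i) => [t|]; last by rewrite eqxx.
  rewrite sub0r oppr_eq0; case: (eqVneq (Some j) t) => [Et _|]; last by rewrite eqxx.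
  have Hn : nxt (Some i) = Some j by rewrite /= Hi Et.
  by rewrite -Hn; apply: depth_lt; rewrite Hn; apply/eqP => -[]; apply/eqP; rewrite eq_sym.
by move: dP'; rewrite det_mulmx dU mul1r.
Qed.

Lemma det_bad : rt (Some r) != Some q -> \det Pf = 0.
Proof.
move=> Hrt.
apply: (@det0_ker _ _ _ (ev (Some q) - yv - ev (rt (Some r))) q).
  rewrite !mulmxBl yP /= -rowE rowPf_q.
  have -> : ev (rt (Some r)) *m Pf = ev (rt (Some r)).
    case Eq: (rt (Some r)) => [j|] /=; last by rewrite mul0mx.
    have Hfj : f j = None by apply/eqP; rewrite -nxt_root -Eq Hac'.
    rewrite -rowE rowPf_none //; apply: contraNneq Hrt => <-; exact/eqP.
  by rewrite /= opprB addrCA subrr addr0 subrr.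
rewrite !mxE yq subr0 ev_entry.
by rewrite eq_sym (negbTE Hrt) subr0 !eqxx.
Qed.


Lemma Ff_det e e' : e \in Ff -> e' \in Ff -> e.1 = e'.1 -> e = e'.
Proof.
case: e => [u t]; case: e' => [u' t'] /=; rewrite !inFf => + + Eu; rewrite -Eu.
case: u {Eu} => [j|] // /eqP -> /eqP [->] //.
Qed.

Lemma uac : uacyclic Ff.
Proof.
apply/negP => /existsP [k /existsP [vs /existsP [es]]].
case/and5P => Hk Hvs Hes /allP Hall /forallP Hj.
have k0 : (0 < k)%N by apply: leq_trans Hk.
have Hnth (i : 'I_k) : nth None vs ((i.+1) %% k) \in vs.
  by apply: mem_nth; rewrite size_tuple ltn_pmod.
have Hends (i : 'I_k) : ((tnth es i).1 \in vs) && ((tnth es i).2 \in vs).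
  move: (Hj i); rewrite /joins => /orP [] /eqP -> /=; by rewrite mem_tnth Hnth.
have inF (i : 'I_k) : tnth es i \in Ff by apply: Hall; exact: mem_tnth.
pose src := fun i : 'I_k => (tnth es i).1.
have src_inj : injective src.
  move=> i j Hij; apply/(tuple_uniqP es) => //.
  by apply: Ff_det; rewrite ?inF.
have Hsub : [set src i | i in 'I_k] \subset [set v in vs].
  by apply/subsetP => v /imsetP [i _ ->]; rewrite inE; case/andP: (Hends i).
have Hcard : #|[set src i | i in 'I_k]| = #|[set v in vs]|.
  rewrite card_imset // card_ord cardsE; apply/esym.
  by rewrite (card_uniqP Hvs) size_tuple.
have cl v : v \in vs -> (nxt v != v) && (nxt v \in vs).
  move=> Hv'; have : v \in [set src i | i in 'I_k].
    by rewrite ((subset_cardP Hcard) Hsub) inE.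
  case/imsetP => i _ ->; rewrite /src.
  have := inF i; have := Hends i.
  case: (tnth es i) => [u t] /= /andP [_ Ht] /Ff_nxt [-> Htu].
  by rewrite Htu Ht.
have v0in : nth None vs 0 \in vs by apply: mem_nth; rewrite size_tuple.
have Hit m : iter m nxt (nth None vs 0) \in vs.
  by elim: m => //= m IH; case/andP: (cl _ IH).
case/andP: (cl _ (Hit n.+1)) => /eqP; rewrite -/(rt _) Hac'.
by [].
Qed.
End Acyc.

Lemma cyc_exists : ~~ acycb ->
  exists u, (nxt u != u) && [exists m : 'I_n.+1, iter m.+1 nxt u == u].
Proof.
move=> /forallPn [v Hv0].
have nr m : (m <= n.+1)%N -> nxt (iter m nxt v) != iter m nxt v.
  move=> Hm; apply: contra Hv0 => /eqP Hr; apply/eqP.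
  by rewrite /rt -(subnK Hm) iterD iter_root.
pose g := fun i : 'I_n.+2 => iter i nxt v.
have : ~~ injectiveb g.
  apply/negP => /injectiveP /leq_card; rewrite card_ord card_option card_ord.
  by rewrite ltnn.
case/injectivePn => i [j Hij Eg].
wlog Hlt : i j Hij Eg / (i < j)%N.
  move=> W; case: (ltngtP i j) => H; first exact: (W i j).
    by apply: (W j i) => //; rewrite eq_sym.
  by case/eqP: Hij; apply: val_inj.
exists (iter i nxt v); apply/andP; split; first by apply: nr; rewrite -ltnS.
have Hm : ((j - i).-1 < n.+1)%N.
  have := ltn_ord j; lia.
apply/existsP; exists (Ordinal Hm) => /=.
rewrite -iterS prednK ?subn_gt0 //.
by rewrite -iterD subnK ?(ltnW Hlt) //; apply/eqP; rewrite -/(g j) -/(g i) Eg.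
Qed.

Definition Cset := [set u | (nxt u != u) && [exists m : 'I_n.+1, iter m.+1 nxt u == u]].
Lemma C_nxt u : u \in Cset -> nxt u \in Cset.
Proof.
rewrite !inE => /andP [Hu /existsP [m /eqP Hm]]; apply/andP; split.
  apply: contra Hu => /eqP H1.
  by have := @iter_root (nxt u) m H1; rewrite -iterSr Hm => <-.
by apply/existsP; exists m; rewrite -iterSr iterS Hm.
Qed.
Lemma C_iter u m : u \in Cset -> iter m nxt u \in Cset.
Proof. by move=> Hu; elim: m => //= m IH; apply: C_nxt. Qed.
Lemma C_img : [set nxt u | u in Cset] = Cset.
Proof.
apply/eqP; rewrite eqEsubset; apply/andP; split.
  by apply/subsetP => x /imsetP [u Hu ->]; exact: C_nxt.
apply/subsetP => u Hu; move: (Hu); rewrite inE => /andP [_ /existsP [m /eqP Hm]].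
apply/imsetP; exists (iter m nxt u); first exact: C_iter.
by rewrite -[LHS]Hm.
Qed.
Lemma C_inj : {in Cset &, injective nxt}.
Proof. by apply/imset_injP; rewrite C_img. Qed.

Lemma det_cyc : ~~ acycb -> \det Pf = 0.
Proof.
move=> /cyc_exists [u0 Hu0].
have Cu0 : u0 \in Cset by rewrite inE.
case/andP: Hu0 => Hr0 _.
case: (nxt_some Hr0) => j0 [Ej0 _].
apply: (@det0_ker _ _ _ (\sum_(u in Cset) gv u) j0).
  rewrite mulmx_suml; under eq_bigr => u _ do rewrite gPf.
  rewrite sumrB -(big_imset _ C_inj) C_img /=; exact: subrr.
rewrite summxE (bigD1 u0) //= gv_entry // Ej0 eqxx big1 ?addr0 // => u /andP [Hu Hne].
rewrite gv_entry; first by rewrite (negbTE Hne).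
by move: Hu; rewrite inE => /andP [].
Qed.

Lemma nuac : ~~ acycb -> ~~ uacyclic Ff.
Proof.
move=> /cyc_exists [u0 Hu0].
have Cu0 : u0 \in Cset by rewrite inE.
case/andP: Hu0 => Hr0 /existsP [m /eqP Hm].
have exP : exists p, (0 < p)%N && (iter p nxt u0 == u0) by exists m.+1; rewrite Hm eqxx.
case: (ex_minnP exP) => p /andP [p0 /eqP Hp] Hmin.
have Hpm : (p <= m.+1)%N by apply: Hmin; rewrite Hm eqxx.
have Hpn : (p < n.+2)%N by have := ltn_ord m; lia.
have Hp2 : (2 <= p)%N.
  case: p p0 Hp {Hmin Hpm Hpn} => [|[|p]] //= _ Hp.
  by rewrite Hp eqxx in Hr0.
have Hdist : {in gtn p &, injective (fun i => iter i nxt u0)}.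
  have key i j : (i < j < p)%N -> iter i nxt u0 = iter j nxt u0 -> False.
    case/andP => Hij Hjp Eij.
    have : iter (p - j + i)%N nxt u0 = u0.
      by rewrite iterD Eij -iterD subnK ?(ltnW Hjp).
    move=> /eqP He; have := Hmin (p - j + i)%N; rewrite He andbT.
    have -> : (0 < p - j + i)%N by lia.
    move=> /(_ isT); lia.
  move=> i j; rewrite !inE => Hi Hj Eij.
  case: (ltngtP i j) => // H1; first by case: (key i j) => //; rewrite H1.
  by case: (key j i) => //; rewrite H1.
pose F1 := fun i => iter i nxt u0.
pose vs := mkseq F1 p.
pose es := mkseq (fun i => (F1 i, F1 i.+1)) p.
have Hsv : size vs == p by rewrite size_mkseq.
have Hse : size es == p by rewrite size_mkseq.
have Hvu : uniq vs by apply/mkseq_uniqP.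
have Hmap : map fst es = vs by rewrite /es /vs /mkseq -map_comp.
rewrite negbK; apply/existsP; exists (Ordinal Hpn).
apply/existsP; exists (Tuple Hsv); apply/existsP; exists (Tuple Hse).
rewrite /ucycle_of /=; apply/and5P; split => //.
- by apply: (@map_uniq _ _ fst); rewrite Hmap.
- apply/allP => e /mapP [i _ ->].
  have := C_iter i Cu0; rewrite inE => /andP [Hn _].
  exact: nxt_Ff.
- apply/forallP => i; rewrite /joins; apply/orP; left.
  rewrite !(tnth_nth None) /= nth_mkseq // (tnth_nth (None, None)) /= nth_mkseq //.
  rewrite nth_mkseq ?ltn_pmod //.
  have [Hlt|] := ltnP i.+1 p; first by rewrite modn_small.
  have := ltn_ord i => Hip Hge; have Eip : i.+1 = p by apply/eqP; rewrite eqn_leq Hip Hge.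
  by rewrite Eip modnn /F1 Hp.
Qed.

Lemma det_Pf : \det Pf = (uacyclic Ff && same_component Ff (Some r) (Some q))%:R.
Proof.
case Hac: acycb.
  rewrite uac // sc_iff //=; case: eqP => [H1|/eqP H1]; [exact: det_good | exact: det_bad].
by rewrite det_cyc ?Hac // (negbTE (nuac _)) ?Hac.
Qed.
End Core.

Section Final.
Variables (R : comNzRingType) (n : nat) (E : rel 'I_n) (Hirr : irreflexive E)
  (Leak : {set 'I_n}) (a : 'I_n -> 'I_n -> R) (a0 : 'I_n -> R) (q r : 'I_n).
Local Notation T := (lnode n).
Local Notation HH := (edges_Gtilde_star E Leak q).

Definition fF (F : {set ledge n}) : {ffun 'I_n -> option T} :=
  [ffun j => [pick t | (Some j, t) \in F]].

Lemma fF_Ff f : fF (Ff f) = f.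
Proof.
apply/ffunP => j; rewrite ffunE; case: pickP => [t /=|Hn].
  by rewrite inFf => /eqP.
case Hj: (f j) => [t|] //; have := Hn t; by rewrite /= inFf Hj eqxx.
Qed.

Lemma forests_sub m u v F : F \in forests_jkl HH m u v ->
  (F \subset HH) /\ (forall w, #|[set e in F | e.1 == w]| <= 1)%N.
Proof.
rewrite inE /spanning_incoming_forest => /and3P [/and3P [Hs _ /forallP Hc] _ _].
by split.
Qed.

Lemma Ff_fF m u v F : F \in forests_jkl HH m u v -> Ff (fF F) = F.
Proof.
case/forests_sub => /subsetP Hs Hc.
apply/setP => [[w t]]; rewrite inFf; case: w => [j|]; last first.
  by apply/esym/negP => /Hs; rewrite inE.
rewrite ffunE; case: pickP => [t' /= Ht'|Hn]; last by rewrite (Hn t).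
apply/eqP/idP => [[<-] //|Ht].
have /card_le1P Hc1 := Hc (Some j).
have Hin e : e \in F -> e.1 = Some j -> e \in [set e in F | e.1 == Some j].
  by move=> He He1; rewrite inE He He1 eqxx.
have := Hc1 _ (Hin _ Ht' erefl) (Some j, t); rewrite Hin //= => /esym/eqP [->] //.
Qed.

Definition cN (f : {ffun 'I_n -> option T}) := #|[set j | (j != q) && (f j == None)]|.

Lemma Ff_imset (f : {ffun 'I_n -> option T}) :
  Ff f = [set (Some j, odflt None (f j)) | j in [set j | f j != None]].
Proof.
apply/setP => [[w t]]; rewrite inFf; apply/idP/imsetP.
  case: w => [j|] // /eqP Hj; exists j; first by rewrite inE Hj.
  by rewrite Hj.
case=> j; rewrite inE; case Hj: (f j) => [t'|] //= _ [-> ->]; by rewrite Hj.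
Qed.

Lemma card_Ff (f : {ffun 'I_n -> option T}) : validf E Leak q f -> (#|Ff f| + cN f).+1 = n.
Proof.
move=> /andP [/eqP Hq _].
rewrite Ff_imset card_in_imset; last by move=> i j _ _ [].
have -> : cN f = #|[set j | f j == None] :\ q|.
  by apply: eq_card => j; rewrite !inE andbC.
have Hqin : q \in [set j | f j == None] by rewrite inE Hq.
rewrite -addnS; have := cardsD1 q [set j | f j == None]; rewrite Hqin add1n => <-.
have <- : ~: [set j | f j != None] = [set j | f j == None].
  by apply/setP => j; rewrite !inE negbK.
by rewrite cardsC card_ord.
Qed.

Lemma forests_iff (f : {ffun 'I_n -> option T}) m :
  (Ff f \in forests_jkl HH m (Some r) (Some q)) =
  [&& validf E Leak q f, uacyclic (Ff f),
      same_component (Ff f) (Some r) (Some q) & #|Ff f| == m].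
Proof.
rewrite inE /spanning_incoming_forest.
have -> : [forall w, #|[set e in Ff f | e.1 == w]| <= 1]%N.
  apply/forallP => w; apply/card_le1_eqP => e e'.
  rewrite !inE => /andP [He /eqP Hw] /andP [He' /eqP Hw'].
  by apply: (@Ff_det _ f); [rewrite inE; exact: He' | rewrite inE; exact: He | rewrite Hw Hw'].
have -> : (Ff f \subset HH) = validf E Leak q f.
  apply/subsetP/idP => [Hs|Hv e].
    apply/andP; split.
      case Hq: (f q) => [t|] //; have := Hs (Some q, t).
      by rewrite inFf Hq eqxx inE => /(_ isT); case: t {Hq} => [?|] /=; rewrite eqxx ?andbF.
    apply/forallP => j; case Hj: (f j) => [t|] //.
    by apply: Hs; rewrite inFf Hj.
  case: e => [[j|] t]; rewrite inFf // => /eqP Hj.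
  by move: Hv => /andP [_ /forallP /(_ j)]; rewrite Hj.
by case: (validf E Leak q f); case: (uacyclic (Ff f)); case: (same_component (Ff f) (Some r) (Some q)); case: (#|Ff f| == m).
Qed.

Local Notation A := (compartmental_matrix E Leak a a0).

Lemma colsum j i : j != q ->
  \sum_(t : T) (if (Some j, t) \in HH then
                 elabel a a0 (Some j, t) * ((i == j)%:R - (Some i == t)%:R) else 0)
  = - A i j.
Proof.
move=> Hjq; rewrite big_optionE /= !inE /= Hjq !andbT subr0.
under eq_bigr => k _ do rewrite inE /= Hjq andbT.
rewrite mxE; case: (eqVneq i j) => [->|Hij].
  rewrite opprB opprK; congr (_ + _); first by case: (j \in Leak); rewrite ?mulr1.
  rewrite [RHS]big_mkcond /=; apply: eq_bigr => k _.
  case Ejk: (E j k) => //; case: (eqVneq j k) => [Ejk'|Hjk].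
    by rewrite Ejk' Hirr in Ejk.
  by rewrite (_ : (Some j == Some k) = false) ?subr0 ?mulr1 //; exact: negbTE.
rewrite (_ : false%:R = 0 :> R) // mulr0 if_same add0r (bigD1 i) //= big1 ?addr0.
  by rewrite (_ : (Some i == Some i) = true) ?eqxx // sub0r mulrN1; case: (E j i); rewrite ?oppr0.
move=> k Hki; case: (E j k) => //.
by rewrite (_ : (Some i == Some k) = false) ?subrr ?mulr0 //; apply: negbTE; rewrite eq_sym.
Qed.

Definition Wt (j : 'I_n) (c : option T) (i : 'I_n) : {poly R} :=
  if j == q then (if c is None then (i == r)%:R else 0)
  else if c is Some t then
    (if (Some j, t) \in HH then
       (elabel a a0 (Some j, t) * ((i == j)%:R - (Some i == t)%:R))%:P else 0)
  else (i == j)%:R * 'X.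

Definition Mq : 'M[{poly R}]_n :=
  \matrix_(i, j) if j == q then (i == r)%:R else ('X%:M - map_mx polyC A) i j.

Lemma Mq_tr : Mq^T = \matrix_(j, i) \sum_c Wt j c i.
Proof.
apply/matrixP => j i; rewrite [LHS]mxE [LHS]mxE [RHS]mxE big_optionE /Wt.
case: (eqVneq j q) => [Ejq|Hjq]; first by rewrite big1 ?addr0.
have -> : \sum_(t : T) (if (Some j, t) \in HH then
       (elabel a a0 (Some j, t) * ((i == j)%:R - (Some i == t)%:R))%:P else 0)
   = (- A i j)%:P.
  rewrite -(colsum i Hjq) rmorph_sum; apply: eq_bigr => t _.
  by case: ((Some j, t) \in HH); rewrite ?polyC0.
rewrite !mxE polyCN; congr (_ - _).
by case: (i == j); rewrite ?mul1r ?mul0r.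
Qed.

Lemma D_Mq : \det (row' r (col' q ('X%:M - map_mx polyC A))) = (-1) ^+ (r + q) * \det Mq.
Proof.
rewrite [\det Mq](expand_det_col _ q) (bigD1 r) //= big1 ?addr0.
  rewrite /cofactor !mxE eqxx eqxx mul1r signrMK; congr (\det _).
  apply/matrixP => i j; rewrite !mxE.
  by rewrite [lift q j == q]eq_sym (negbTE (neq_lift q j)).
by move=> i Hir; rewrite !mxE eqxx (negbTE Hir) mul0r.
Qed.

Lemma Wdet (f : {ffun 'I_n -> option T}) :
  \det (\matrix_(j, i) Wt j (f j) i) =
  if validf E Leak q f then
    (piF a a0 (Ff f) * (uacyclic (Ff f) && same_component (Ff f) (Some r) (Some q))%:R)
      *: 'X^(cN f)
  else 0.
Proof.
case: ifP => Hv; last first.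
  move/negbT: Hv; rewrite negb_and => /orP [Hq|/forallPn [j Hj]].
    apply: (@det_row0 _ _ _ q) => i; rewrite mxE /Wt eqxx.
    by case: (f q) Hq.
  apply: (@det_row0 _ _ _ j) => i; rewrite mxE /Wt.
  case: (f j) Hj => [t|] // Ht; rewrite (negbTE Ht).
  by case: (j == q).
pose sv : 'rV[{poly R}]_n := \row_j (if j == q then 1 else
   if f j is Some t then (elabel a a0 (Some j, t))%:P else 'X).
have -> : \matrix_(j, i) Wt j (f j) i = diag_mx sv *m map_mx polyC (Pf R q r f).
  apply/matrixP => j i; rewrite mul_diag_mx !mxE /Wt.
  case: (eqVneq j q) => [Ejq|Hjq]; first by rewrite Ejq (fq Hv) mul1r polyC_natr.
  case Hj: (f j) => [t|]; first by rewrite (fH Hv Hj) polyCM.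
  by rewrite polyC_natr mulrC.
rewrite det_mulmx det_diag det_map_mx (det_Pf _ Hirr _ Hv) /=.
suff -> : \prod_(i < n) sv 0 i = (piF a a0 (Ff f))%:P * 'X^(cN f).
  by rewrite -mul_polyC polyCM mulrAC.
rewrite (bigID (fun j => f j == None)) /= mulrC; congr (_ * _).
  rewrite Ff_imset /piF big_imset /=; last by move=> i j _ _ [].
  rewrite rmorph_prod; apply: eq_big => j; first by rewrite inE.
  rewrite mxE; case Hj: (f j) => [t|] //= _.
  by case: eqP => // Ejq; rewrite Ejq (fq Hv) in Hj.
rewrite (bigID (fun j => j == q)) /= big1 ?mul1r; last first.
  by move=> j /andP [_ /eqP ->]; rewrite mxE eqxx.
rewrite /cN -prodr_const; apply: eq_big => j.
  by rewrite !inE andbC.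
by move=> /andP [/eqP Hj Hjq]; rewrite mxE (negbTE Hjq) Hj.
Qed.
End Final.

Unset Implicit Arguments.
Theorem proposition3p12 (R : comNzRingType) (n : nat) (E : rel 'I_n)
  (Hirr : irreflexive E) (In Out Leak : {set 'I_n})
  (a : 'I_n -> 'I_n -> R) (a0 : 'I_n -> R) (q r : 'I_n) :
  let A := compartmental_matrix E Leak a a0 in
  let D := \det (row' r (col' q ('X%:M - map_mx polyC A))) in
  (size D <= n)%N /\
  forall k : nat, (k < n)%N ->
    D`_k = (-1) ^+ (q + r)%N *
           \sum_(F in forests_jkl (edges_Gtilde_star E Leak q) (n - k - 1)
                                  (Some r) (Some q))
              piF a a0 F.
Proof.
move=> A D.
have HD : D = (-1) ^+ (r + q) * \det (Mq E Leak a a0 q r) by rewrite /D D_Mq.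
have Hdet : \det (Mq E Leak a a0 q r) =
    \sum_(f : {ffun 'I_n -> option (lnode n)}) \det (\matrix_(j, i) Wt E Leak a a0 q r j (f j) i).
  by rewrite -det_tr (Mq_tr Hirr) det_expand.
have Hcoef k : D`_k = (-1) ^+ (r + q) *
    \sum_(f : {ffun 'I_n -> option (lnode n)})
      (if validf E Leak q f && (cN q f == k) then
         piF a a0 (Ff f) * (uacyclic (Ff f) && same_component (Ff f) (Some r) (Some q))%:R
       else 0).
  rewrite HD -(rmorph_sign (@polyC R)) coefCM Hdet coef_sum; congr (_ * _).
  apply: eq_bigr => f _; rewrite (Wdet Hirr); case: (validf E Leak q f) => /=.
    by rewrite coefZ coefXn eq_sym; case: (cN q f == k); rewrite ?mulr1 ?mulr0.
  by rewrite coef0.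
split.
  apply/leq_sizeP => k Hk; rewrite Hcoef big1 ?mulr0 // => f _.
  case: ifP => // /andP [Hv /eqP Hc]; have := card_Ff Hv; lia.
move=> k Hk; rewrite Hcoef addnC; congr (_ * _).
rewrite (reindex_onto (fun f => Ff f) (@fF n)) /=; last by move=> F HF; exact: Ff_fF HF.
rewrite [RHS]big_mkcond /=; apply: eq_bigr => f _; rewrite fF_Ff eqxx andbT forests_iff.
case Hv: (validf E Leak q f) => //=.
have Hc := card_Ff Hv.
have -> : (#|Ff f| == n - k - 1)%N = (cN q f == k) by apply/eqP/eqP; lia.
case: (uacyclic _); case: (same_component _ _ _); case: (cN q f == k);
  by rewrite ?mulr1 ?mulr0.
Qed.
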